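(* Let $i\geqslant 1$ and $d\geqslant 4$, $d\neq 6$, be integers. For $q=2,\dots,[d/2]$ set $$E_q=\binom{d+i+1}{i+1}-\binom{d-2q+i+1}{i+1}-\binom{q+i+1}{i+1}.$$ Then $\min\{E_q\mid q=2,\dots,[d/2]\}$ is attained at $q=2$.
   Context: $[x]$ denotes the integer part of $x$. *)

(* Defs.v *)
From mathcomp Require Import all_boot all_algebra.
Local Open Scope ring_scope.

(* E_q = C(d+i+1,i+1) - C(d-2q+i+1,i+1) - C(q+i+1,i+1), computed in int
   (for 2 <= q <= d/2 we have d - 2q >= 0, so the nat subtraction d - 2*q is exact). *)
Definition Eq (d i q : nat) : int :=
  ('C(d + i + 1, i + 1))%:Z - ('C(d - 2 * q + i + 1, i + 1))%:Z
  - ('C(q + i + 1, i + 1))%:Z.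

(* Main.v *)
Require Import Defs.
From mathcomp Require Import all_boot all_algebra.
From mathcomp Require Import all_order zify.
Import Order.TTheory GRing.Theory Num.Theory.
Local Open Scope ring_scope.

Section Conv.
Variable h : nat -> int.
Variable b : nat.
Hypothesis hc : forall y, (y.+2 <= b)%N -> h y.+1 - h y <= h y.+2 - h y.+1.

Lemma conv_up n : forall x, (x + n <= b)%N -> h x <= h x.+1 -> h x <= h (x + n).
Proof.
elim: n => [|n IH] x hb hx; first by rewrite addn0.
case: n IH hb => [|n] IH hb; first by rewrite addn1.
have h1 : h x.+1 <= h x.+2.
  have := hc x; move: hx; lia.
have := IH x.+1; rewrite addSnnS; move=> /(_ hb h1); lia.
Qed.

Lemma conv_down n : forall y, ((y + n).+1 <= b)%N -> h (y + n).+1 <= h (y + n) ->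
  h (y + n).+1 <= h y.
Proof.
elim: n => [|n IH] y hb hx; first by rewrite addn0 in hx *.
rewrite addnS in hb hx *.
have h1 : h (y + n).+1 <= h (y + n).
  have := hc (y + n); move: hx; lia.
have := IH y (ltnW hb) h1; lia.
Qed.

Lemma conv_max a x : (a <= x)%N -> (x <= b)%N -> h x <= h a \/ h x <= h b.
Proof.
move=> hax hxb.
case: (ltnP x b) => hxb'; last first.
  by right; have -> : x = b by apply/eqP; rewrite eqn_leq hxb hxb'.
have [hup|hdn] := lerP (h x) (h x.+1).
  right; have := conv_up (b - x) x; rewrite subnKC //; move=> H; exact: H.
case: (ltnP a x) => hax'; last first.
  by left; have -> : x = a by apply/eqP; rewrite eqn_leq hax hax'.
left.
have hx' : x = (a + (x.-1 - a)).+1 by lia.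
have H := hc (x.-1).
have e1 : x.-1.+1 = x by lia.
have e2 : x.-1.+2 = x.+1 by lia.
rewrite e1 in H.
have H2 := H hxb'.
rewrite hx'; apply: conv_down; rewrite -hx'; first by lia.
have e3 : (a + (x.-1 - a))%N = x.-1 by lia.
rewrite e3.
lia.
Qed.
End Conv.

Section Bin.
Variable i : nat.
Definition F (n : nat) : int := ('C(n + i + 1, i + 1))%:Z.
Definition D (n : nat) : int := ('C(n + i + 1, i))%:Z.

Lemma FS n : F n.+1 = F n + D n.
Proof.
rewrite /F /D !addSn [(i + 1)%N]addn1 binS.
by rewrite PoszD.
Qed.

Lemma Dmono m n : (m <= n)%N -> D m <= D n.
Proof. by move=> h; rewrite /D lez_nat leq_bin2l // !leq_add2r. Qed.

Lemma Fmono m n : (m <= n)%N -> F m <= F n.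
Proof. by move=> h; rewrite /F lez_nat leq_bin2l // !leq_add2r. Qed.
End Bin.

Theorem lemma1p1 (i d : nat) (hi : (1 <= i)%N) (hd : (4 <= d)%N) (hd6 : d <> 6%N) :
  forall q : nat, (2 <= q)%N -> (q <= d./2)%N -> Eq d i 2 <= Eq d i q.
Proof.
move=> q hq2 hqK.
set K := d./2.
have hdK : d = (K.*2 + odd d)%N by rewrite /K -[in LHS](odd_double_half d) addnC.
set h := fun y => F i (d - 2 * y) + F i y.
suff : h q <= h 2%N.
  by rewrite /h /Eq /F; lia.
have hc : forall y, (y.+2 <= K)%N -> h y.+1 - h y <= h y.+2 - h y.+1.
  move=> y hy.
  have [n hn] : exists n, (d - 2 * y = n.+4)%N by exists (d - 2 * y - 4)%N; lia.
  have e1 : (d - 2 * y.+1 = n.+2)%N by lia.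
  have e2 : (d - 2 * y.+2 = n)%N by lia.
  rewrite /h hn e1 e2 !FS.
  have := Dmono i _ _ (leqnSn y); have := Dmono i _ _ (leq_addr 2 n);
  have := Dmono i _ _ (leq_addr 2 n.+1).
  rewrite !addn2. lia.
case: (@conv_max h K hc 2 q hq2 hqK) => // H.
apply: (le_trans H).
rewrite /h.
case: (ltnP K 3) => hK3.
  by have -> : K = 2%N by lia.
case hod : (odd d) hdK => hdK.
  have -> : (d - 2 * K = 1)%N by lia.
  have -> : (d - 2 * 2 = (K + (K - 3)))%N by lia.
  have := Fmono i _ _ (leq_addr (K - 3) K); have := Fmono i _ _ (isT : (1 <= 2)%N).
  lia.
have -> : (d - 2 * K = 0)%N by lia.
have -> : (d - 2 * 2 = (K + (K - 4)))%N by lia.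
have := Fmono i _ _ (leq_addr (K - 4) K); have := Fmono i _ _ (isT : (0 <= 2)%N).
lia.
Qed.
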